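(* Assume (H2). Then for any $q,q'\in\mathbb R^d$, $\delta,\delta'>0$ and $T>0$, \[\liminf_{n\to\infty}\inf_{z\in E:|z-nq|<\delta n}\frac1n\log G\bigl(z,nB(q',\delta')\bigr)\ \ge\ \liminf_{n\to\infty}\inf_{z\in E:|z-nq|<\delta n}\frac1n\log\mathbb P_z\bigl(Z(Tn)\in nB(q',\delta'/2)\bigr).\]
   Context: Let $E\subset\mathbb R^d$ be unbounded and $(Z(t))_{t\ge0}$ a continuous-time strong Markov process on $E$ with right-continuous paths having left limits; $\mathbb P_z,\mathbb E_z$ denote probability and expectation given $Z(0)=z$. $G(z,B)=\int_0^\infty\mathbb P_z(Z(t)\in B)\,dt$. For $B\subset\mathbb R^d$ and $n>0$, $nB=\{nx:x\in B\}$; $B(x,r)$ is the open ball of center $x$ and radius $r$. (H2): the function $\hat\varphi(a)=\sup_{z\in E}\sup_{t\in[0,1]}\mathbb E_z(e^{a\cdot(Z(t)-z)})$ is finite for every $a\in\mathbb R^d$. *)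

(* Defs.v *)
From HB Require Import structures.
From mathcomp Require Import all_boot all_order all_algebra.
From mathcomp Require Import all_classical all_reals all_analysis measurable_realfun.
Set Implicit Arguments. Unset Strict Implicit. Unset Printing Implicit Defensive.
Import Order.TTheory GRing.Theory Num.Theory.
Import numFieldNormedType.Exports.
Local Open Scope classical_set_scope.
Local Open Scope ring_scope.

Section Defs.
Context {R : realType} {d : nat}.

Definition dotp (a x : 'rV[R]_d) : R := \sum_(i < d) a ord0 i * x ord0 i.
Definition enorm (x : 'rV[R]_d) : R := Num.sqrt (dotp x x).
Definition eball (x : 'rV[R]_d) (r : R) : set 'rV[R]_d := [set y | enorm (y - x) < r].
Definition scale_set (n : R) (B : set 'rV[R]_d) : set 'rV[R]_d := [set n *: x | x in B].
Definition borel_rV : set (set 'rV[R]_d) := <<s [set U : set 'rV[R]_d | open U] >>.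

Definition unbounded (E : set 'rV[R]_d) : Prop :=
  ~ (exists M : R, forall x, E x -> enorm x <= M).

Context {dO : measure_display} {Omega : measurableType dO}.

Definition nat_filt (Z : R -> Omega -> 'rV[R]_d) (s : R) : set (set Omega) :=
  <<s [set A | exists u, 0 <= u <= s /\ exists B, borel_rV B /\ A = Z u @^-1` B] >>.

Definition stopping_time (Z : R -> Omega -> 'rV[R]_d) (tau : Omega -> \bar R) : Prop :=
  (forall w, (0 <= tau w)%E) /\
  forall t, 0 <= t -> nat_filt Z t [set w | (tau w <= t%:E)%E].

Definition F_tau (Z : R -> Omega -> 'rV[R]_d) (tau : Omega -> \bar R) (A : set Omega) : Prop :=
  forall t, 0 <= t -> nat_filt Z t (A `&` [set w | (tau w <= t%:E)%E]).

Definition strong_markov_cadlag (E : set 'rV[R]_d) (P : 'rV[R]_d -> probability Omega R)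
    (Z : R -> Omega -> 'rV[R]_d) : Prop :=
  [/\ (forall t w, E (Z t w)) /\
      (forall z, E z -> P z [set w | Z 0 w = z] = 1%E),
      (forall t B, borel_rV B -> measurable (Z t @^-1` B)),
      (forall t B (U : set (\bar R)), borel_rV B -> measurable U ->
         exists C, borel_rV C /\
           E `&` ((fun y => P y (Z t @^-1` B)) @^-1` U) = E `&` C),
      (forall w t, 0 <= t ->
         (Z^~ w @ t^'+ --> Z t w) /\ (0 < t -> cvg (Z^~ w @ t^'-))) &
      (forall z tau A t B, E z -> stopping_time Z tau -> F_tau Z tau A -> 0 <= t ->
         borel_rV B ->
         P z (A `&` [set w | (tau w < +oo)%E /\ B (Z (fine (tau w) + t) w)]) =
         (\int[P z]_(w in A `&` [set w | (tau w < +oo)%E])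
             P (Z (fine (tau w)) w) (Z t @^-1` B))%E)].

Definition Green (P : 'rV[R]_d -> probability Omega R) (Z : R -> Omega -> 'rV[R]_d)
    (z : 'rV[R]_d) (B : set 'rV[R]_d) : \bar R :=
  (\int[lebesgue_measure]_(t in `[0%R, +oo[) P z (Z t @^-1` B))%E.

Definition H2 (E : set 'rV[R]_d) (P : 'rV[R]_d -> probability Omega R)
    (Z : R -> Omega -> 'rV[R]_d) : Prop :=
  forall a : 'rV[R]_d, exists M : R, forall z, E z -> forall t, 0 <= t <= 1 ->
    (\int[P z]_w (expR (dotp a (Z t w - z)))%:E <= M%:E)%E.

End Defs.

(* Main.v *)
Require Import Defs.
From HB Require Import structures.
From mathcomp Require Import all_boot all_order all_algebra.
From mathcomp Require Import all_classical all_reals all_analysis measurable_realfun.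
From mathcomp Require Import ring lra.
Import Order.TTheory GRing.Theory Num.Theory.
Import numFieldNormedType.Exports.
Local Open Scope classical_set_scope.
Local Open Scope ring_scope.
Import HBNNSimple.
Lemma integral_lb_cst d (T : measurableType d) (R : realType)
  (mu : {measure set T -> \bar R}) (D A : set T) (f : T -> \bar R) (c : R) :
  measurable A -> A `<=` D -> 0 <= c ->
  (forall x, D x -> (0 <= f x)%E) -> (forall x, A x -> (c%:E <= f x)%E) ->
  (c%:E * mu A <= \int[mu]_(x in D) f x)%E.
Proof.
move=> mA AD c0 f0 fc.
rewrite ge0_integralE//.
apply: ereal_sup_ubound => /=.
exists (scale_nnsfun (indic_nnsfun R mA) c0).
  move=> x /=; rewrite mindicE /patch; case: ifPn => Dx.
    case: (boolP (x \in A)) => [/[!inE] Ax|_].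
      by rewrite mulr1; exact: fc.
    by rewrite mulr0; apply: f0; rewrite -inE.
  rewrite memNset ?mulr0// => Ax; move: Dx; rewrite notin_setE; apply; exact: AD.
rewrite -[mu A](sintegral_indic) (_ : \1_A = indic_nnsfun R mA)// -sintegralrM.
by apply: eq_sintegral => y.
Qed.
Section Topo.
Context {R : realType} {d : nat}.

Lemma cont_sum (T : topologicalType) (s : seq 'I_d) (F : 'I_d -> T -> R) :
  (forall i, continuous (F i)) -> continuous (fun v => \sum_(i <- s) F i v).
Proof.
move=> Fc; elim: s => [|i s IH].
  under eq_fun do rewrite big_nil; move=> x; exact: cvg_cst.
under eq_fun do rewrite big_cons; move=> x; exact: (continuousD (Fc i x) (IH x)).
Qed.

Lemma dotp_cont (k : R) (c : 'rV[R]_d) :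
  continuous (fun v : 'rV[R]_d => dotp (k *: v - c) (k *: v - c)).
Proof.
rewrite /dotp; apply: cont_sum => i.
under eq_fun do rewrite !mxE.
move=> x.
have h1 : {for x, continuous (fun v : 'rV[R]_d => k * v ord0 i)}.
  apply: (@continuousM _ _ (fun=> k) (fun v : 'rV[R]_d => v ord0 i)).
    exact: cst_continuous.
  exact: coord_continuous.
have h2 : {for x, continuous (fun v : 'rV[R]_d => c ord0 i)} by exact: cst_continuous.
have h := continuousB h1 h2.
exact: (continuousM h h).
Qed.

Lemma open_enorm (k : R) (c : 'rV[R]_d) (r : R) :
  open [set v : 'rV[R]_d | enorm (k *: v - c) < r].
Proof.
apply: (@open_comp _ _ (fun v : 'rV[R]_d => enorm (k *: v - c)) [set y | y < r]); last exact: open_lt.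
move=> x _; apply: (@continuous_comp _ _ _ (fun v : 'rV[R]_d => dotp (k *: v - c) (k *: v - c)) (@Num.sqrt R)); [exact: dotp_cont|exact: sqrt_continuous].
Qed.

Lemma borel_open (U : set 'rV[R]_d) : open U -> borel_rV U.
Proof. by move=> oU; apply: sub_sigma_algebra. Qed.

Lemma borel_coord (i : 'I_d) (s m : R) (y : 'rV[R]_d) :
  borel_rV [set v : 'rV[R]_d | m <= s * (v ord0 i - y ord0 i)].
Proof.
have -> : [set v : 'rV[R]_d | m <= s * (v ord0 i - y ord0 i)] =
   ~` [set v : 'rV[R]_d | s * (v ord0 i - y ord0 i) < m].
  apply/seteqP; split => v /=.
    by move=> h; rewrite ltNge h.
  by rewrite ltNge => /negP; rewrite negbK.
apply: sigma_algebraC; apply: borel_open.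
apply: (@open_comp _ _ (fun v : 'rV[R]_d => s * (v ord0 i - y ord0 i)) [set z | z < m]); last exact: open_lt.
move=> x _.
have h1 : {for x, continuous (fun v : 'rV[R]_d => v ord0 i - y ord0 i)}.
  apply: (@continuousB _ _ _ (fun v : 'rV[R]_d => v ord0 i) (fun=> y ord0 i)).
    exact: coord_continuous.
  exact: cst_continuous.
apply: (@continuousM _ _ (fun=> s) (fun v : 'rV[R]_d => v ord0 i - y ord0 i)) => //.
exact: cst_continuous.
Qed.

End Topo.
Lemma ub_union d (T : measurableType d) (R : realType) (mu : {measure set T -> \bar R})
  (I : Type) (s : seq I) (A : I -> set T) :
  (forall i, measurable (A i)) ->
  (mu (\big[setU/set0]_(i <- s) A i) <= \sum_(i <- s) mu (A i))%E.
Proof.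
move=> mA; elim: s => [|i s IH]; first by rewrite !big_nil measure0.
rewrite !big_cons; apply: le_trans (measureU2 _ _ _) _ => //.
  by apply: big_ind => //; move=> ? ? ? ?; exact: measurableU.
exact: leeD2l.
Qed.

Lemma dotp_delta (R : realType) (d : nat) (i : 'I_d) (sg : R) (x : 'rV[R]_d) :
  dotp (sg *: delta_mx ord0 i) x = sg * x ord0 i.
Proof.
rewrite /dotp (bigD1 i)//= big1 ?addr0; first by rewrite !mxE !eqxx mulr1.
by move=> j ji; rewrite !mxE (negbTE ji) andbF mulr0 mul0r.
Qed.

Lemma big_union_mem (T : Type) (I : finType) (A : I -> set T) p w :
  A p w -> (\big[setU/set0]_(i : I) A i) w.
Proof. by move=> h; rewrite (bigD1 p)//=; left. Qed.

Lemma dotp_ge0 (R : realType) (d : nat) (x : 'rV[R]_d) : 0 <= dotp x x.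
Proof. by apply: sumr_ge0 => i _; rewrite -expr2 sqr_ge0. Qed.

Lemma enorm_lt (R : realType) (d : nat) (x : 'rV[R]_d) (r : R) :
  0 < r -> (enorm x < r) = (dotp x x < r ^+ 2).
Proof.
move=> r0; rewrite /enorm -{1}(ger0_norm (ltW r0)) -sqrtr_sqr ltr_sqrt//.
by rewrite exprn_gt0.
Qed.

Section Tail.
Context {R : realType} {d : nat} {dO : measure_display} {Omega : measurableType dO}.
Variables (E : set 'rV[R]_d) (P : 'rV[R]_d -> probability Omega R)
  (Z : R -> Omega -> 'rV[R]_d).
Hypothesis mZ : forall t B, borel_rV B -> measurable (Z t @^-1` B).
Hypothesis h2 : H2 E P Z.

Lemma chernoff y s i sg M m : E y -> 0 <= s <= 1 ->
  (forall z, E z -> forall t, 0 <= t <= 1 ->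
    (\int[P z]_w (expR (dotp (sg *: delta_mx ord0 i) (Z t w - z)))%:E <= M%:E)%E) ->
  ((expR m)%:E * P y (Z s @^-1` [set v | (m <= sg * (v ord0 i - y ord0 i))%R]) <= M%:E)%E.
Proof.
move=> Ey s01 HM; apply: le_trans (HM y Ey s s01).
apply: integral_lb_cst => //.
- by apply: mZ; apply: borel_coord.
- by move=> w /= h; rewrite lee_fin ler_expR dotp_delta !mxE.
Qed.

Lemma tail : exists K : R, 0 < K /\ forall rho, K <= rho -> forall y, E y ->
  forall s, 0 <= s <= 1 ->
  ((1/2)%:E <= P y (Z s @^-1` [set v | (enorm (v - y) < rho)%R]))%E.
Proof.
pose sgn (b : bool) : R := if b then 1 else -1.
have [f hf] := choice (fun (p : 'I_d * bool) => h2 (sgn p.2 *: delta_mx ord0 p.1)).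
pose M := 1 + \sum_(p : 'I_d * bool) `|f p|.
have M1 : 1 <= M by rewrite lerDl sumr_ge0.
have fM p : f p <= M.
  apply: le_trans (ler_norm _) _; rewrite /M (bigD1 p)//= addrCA lerDl.
  by rewrite addr_ge0// sumr_ge0.
pose m := 4 * d%:R * M.
have m0 : 0 <= m by rewrite /m mulr_ge0 ?mulr_ge0// (le_trans _ M1).
exists (1 + d%:R * m ^+ 2); split.
  by rewrite -[X in X < _]addr0 ltr_leD// mulr_ge0// sqr_ge0.
move=> rho hrho y Ey s s01.
have rho1 : 1 <= rho by apply: le_trans hrho; rewrite lerDl mulr_ge0// sqr_ge0.
have rho0 : 0 < rho by apply: lt_le_trans rho1.
set A := Z s @^-1` _.
have mA : measurable A.
  apply: mZ; apply: borel_open.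
  have -> : [set v | enorm (v - y) < rho] = [set v : 'rV[R]_d | enorm (1 *: v - y) < rho].
    by apply/seteqP; split => v /=; rewrite scale1r.
  exact: open_enorm.
pose S (p : 'I_d * bool) := Z s @^-1` [set v | (m <= sgn p.2 * (v ord0 p.1 - y ord0 p.1))%R].
have mS p : measurable (S p) by apply: mZ; apply: borel_coord.
have SP p : (P y (S p) <= (1 / (4 * d%:R))%:E)%E.
  have d0 : (0 < d)%N by case: p => [[i ip] b] /=; apply: leq_ltn_trans ip.
  have fME : ((f p)%:E <= M%:E)%E by rewrite lee_fin.
  have := @chernoff y s p.1 (sgn p.2) M m Ey s01 (fun z Ez t t01 =>
     le_trans (hf p z Ez t t01) fME).
  rewrite -/(S p).
  have := probability_le1 (P y) (mS p).
  case: (P y (S p)) => [x| |]//= _; last by rewrite leNye.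
  rewrite -EFinM !lee_fin => hx.
  have em : m <= expR m by apply: le_trans (expR_ge1Dx m); rewrite lerDr.
  have D0 : 0 < (d%:R : R) by rewrite ltr0n.
  rewrite ler_pdivlMr ?mulr_gt0//.
  rewrite /m in em.
  have [x0|x0] := lerP x 0.
    by nra.
  have h1 : x * (4 * d%:R * M) <= M.
    by apply: le_trans hx; rewrite mulrC ler_wpM2r// ltW.
  have h2' : x * (4 * d%:R) * M <= 1 * M by rewrite mul1r -mulrA.
  by rewrite ler_pM2r ?(lt_le_trans ltr01) in h2'.
have sub : ~` A `<=` \big[setU/set0]_(p : 'I_d * bool) S p.
  move=> w /= nA.
  have [[p Sp]|nS] := pselect (exists p, S p w); first exact: big_union_mem Sp.
  exfalso; apply: nA; rewrite /A /= enorm_lt //.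
  have hX i : (Z s w - y) ord0 i * (Z s w - y) ord0 i <= m * m.
    have g1 : ~ S (i, true) w by move=> h; apply: nS; exists (i, true).
    have g2 : ~ S (i, false) w by move=> h; apply: nS; exists (i, false).
    rewrite /S /= in g1 g2; move/negP: g1; move/negP: g2.
    rewrite -!ltNge !mxE !mulN1r !mul1r; nra.
  apply: le_lt_trans (_ : _ <= \sum_(i < d) m * m) _; first exact: ler_sum.
  rewrite sumr_const card_ord -mulr_natl.
  have : 1 + d%:R * m ^+ 2 <= rho ^+ 2 by apply: le_trans hrho _; rewrite expr2 ler_peMr// ltW.
  by rewrite expr2; lra.
have hC : (P y (~` A) <= (1/2)%:E)%E.
  apply: le_trans (le_measure _ _ _ sub) _.
  - by rewrite inE; exact: measurableC.
  - rewrite inE; apply: big_ind => //; move=> ? ? ? ?; exact: measurableU.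
  apply: le_trans (@ub_union _ _ _ (P y) _ _ S mS) _.
  apply: le_trans (lee_sum _ (fun p _ => SP p)) _.
  rewrite sumEFin lee_fin sumr_const card_prod card_ord card_bool.
  case: d {f hf M M1 fM m m0 hrho A mA S mS SP sub} => [|n]; first by rewrite mulr0n.
  rewrite -[_ *+ _]mulr_natr natrM.
  have hn : (n.+1%:R : R) != 0 by rewrite pnatr_eq0.
  by rewrite le_eqVlt; apply/orP; left; apply/eqP; field.
rewrite probability_setC // in hC.
move: hC; have := probability_le1 (P y) mA.
case: (P y A) => [x| |]//= _.
by rewrite -EFinD !lee_fin; lra.
Qed.

End Tail.
Section Geo.
Context {R : realType} {d : nat}.
Implicit Types (a b v y c : 'rV[R]_d).

Lemma dotp_add_le a b :
  dotp (a + b) (a + b) <= 2 * dotp a a + 2 * dotp b b.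
Proof.
rewrite /dotp !mulr_sumr -big_split /=; apply: ler_sum => i _.
rewrite !mxE; have := sqr_ge0 (a ord0 i - b ord0 i); rewrite expr2; nra.
Qed.

Lemma dotp_scale (k : R) a : dotp (k *: a) (k *: a) = k ^+ 2 * dotp a a.
Proof.
by rewrite /dotp mulr_sumr; apply: eq_bigr => i _; rewrite !mxE; ring.
Qed.

Lemma scale_set_eball (N : R) c (r : R) : 0 < N ->
  scale_set N (eball c r) = [set v | enorm (N^-1 *: v - c) < r].
Proof.
move=> N0; apply/seteqP; split => v /=.
  by move=> [x xb <-]; rewrite scalerA mulVf ?gt_eqF// scale1r.
move=> h; exists (N^-1 *: v) => //.
by rewrite scalerA mulfV ?gt_eqF// scale1r.
Qed.

Lemma close_in (N dl : R) y v c : 0 < N -> 0 < dl ->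
  enorm (N^-1 *: y - c) < dl / 2 -> enorm (v - y) < N * dl / 2 ->
  enorm (N^-1 *: v - c) < dl.
Proof.
move=> N0 dl0; rewrite !enorm_lt ?mulr_gt0 ?divr_gt0// => h1 h2.
have -> : N^-1 *: v - c = (N^-1 *: y - c) + N^-1 *: (v - y).
  by rewrite scalerBr addrCA addrAC subrr add0r.
apply: le_lt_trans (dotp_add_le _ _) _.
rewrite dotp_scale.
have h3 : N^-1 ^+ 2 * dotp (v - y) (v - y) < (dl / 2) ^+ 2.
  have -> : (dl / 2) ^+ 2 = N^-1 ^+ 2 * (N * dl / 2) ^+ 2.
    by field; rewrite gt_eqF.
  by rewrite ltr_pM2l// exprn_gt0// invr_gt0.
have : (dl / 2) ^+ 2 * 4 = dl ^+ 2 by field.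
lra.
Qed.

End Geo.

Section Markov.
Context {R : realType} {d : nat} {dO : measure_display} {Omega : measurableType dO}.
Variables (E : set 'rV[R]_d) (P : 'rV[R]_d -> probability Omega R)
  (Z : R -> Omega -> 'rV[R]_d).
Hypothesis hSM : strong_markov_cadlag E P Z.
Hypothesis h2 : H2 E P Z.

Let mZ : forall t B, borel_rV B -> measurable (Z t @^-1` B).
Proof. by case: hSM. Qed.

Let EZ : forall t w, E (Z t w).
Proof. by case: hSM => -[]. Qed.

Lemma borel_ball (N : R) (c : 'rV[R]_d) (r : R) : 0 < N -> borel_rV (scale_set N (eball c r)).
Proof. by move=> N0; rewrite scale_set_eball//; apply: borel_open; exact: open_enorm. Qed.

Lemma nat_filtT t : nat_filt Z t setT.
Proof.
have [h0 hC _] := @smallest_sigma_algebra _ setT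
  [set A | exists u, 0 <= u <= t /\ exists B, borel_rV B /\ A = Z u @^-1` B].
by rewrite -(setD0 setT); apply: hC.
Qed.

Lemma nat_filt0 t : nat_filt Z t set0.
Proof. exact: sigma_algebra0. Qed.

Lemma markov_step (K N dl t0 s : R) (q' z : 'rV[R]_d) :
  (forall rho, K <= rho -> forall y, E y -> forall s, 0 <= s <= 1 ->
     ((1/2)%:E <= P y (Z s @^-1` [set v | (enorm (v - y) < rho)%R]))%E) ->
  K <= N * dl / 2 -> 0 < N -> 0 < dl -> 0 <= t0 -> 0 <= s <= 1 -> E z ->
  ((1/2)%:E * P z (Z t0 @^-1` scale_set N (eball q' (dl/2))) <=
   P z (Z (t0 + s) @^-1` scale_set N (eball q' dl)))%E.
Proof.
move=> tl hK N0 dl0 t00 s01 Ez.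
set B2 := scale_set N (eball q' (dl/2)); set B1 := scale_set N (eball q' dl).
have bB2 : borel_rV B2 by apply: borel_ball.
have bB1 : borel_rV B1 by apply: borel_ball.
pose tau := fun _ : Omega => t0%:E.
have st : stopping_time Z tau.
  split => [w|t t0']; first by rewrite /tau lee_fin.
  have [h|h] := lerP t0 t.
    have -> : [set w | (tau w <= t%:E)%E] = setT.
      by apply/seteqP; split => w //= _; rewrite /tau lee_fin.
    exact: nat_filtT.
  have -> : [set w | (tau w <= t%:E)%E] = set0.
    by apply/seteqP; split => w //=; rewrite /tau lee_fin leNgt h.
  exact: nat_filt0.
set A := Z t0 @^-1` B2.
have FA : F_tau Z tau A.
  move=> t t0'; have [h|h] := lerP t0 t.
    have -> : A `&` [set w | (tau w <= t%:E)%E] = A.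
      by apply/seteqP; split => w /=; [case|move=> ?; split => //; rewrite /tau lee_fin].
    by apply: sub_sigma_algebra; exists t0; split; [rewrite t00 h|exists B2].
  have -> : A `&` [set w | (tau w <= t%:E)%E] = set0.
    by apply/seteqP; split => w //= -[_]; rewrite /tau lee_fin leNgt h.
  exact: nat_filt0.
case/andP: (s01) => s0 s1.
have [_ _ _ _ hM] := hSM.
have := hM z tau A s B1 Ez st FA s0 bB1.
rewrite /tau /=.
have -> : [set w | (t0%:E < +oo)%E /\ B1 (Z (t0 + s) w)] = Z (t0 + s) @^-1` B1.
  by apply/seteqP; split => w /=; [case|move=> ?; split => //; rewrite ltry].
have -> : [set w : Omega | (t0%:E < +oo)%E] = setT.
  by apply/seteqP; split => w //= _; rewrite ltry.
rewrite setIT => eq.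
have mA : measurable A by exact: mZ.
have mB : measurable (Z (t0 + s) @^-1` B1) by exact: mZ.
apply: le_trans (_ : _ <= P z (A `&` Z (t0 + s) @^-1` B1))%E _; last first.
  by apply: le_measure; rewrite ?inE//; exact: measurableI.
rewrite eq; apply: integral_lb_cst => //.
move=> w Aw; set y := Z t0 w.
apply: le_trans (tl (N * dl / 2) hK y (EZ t0 w) s s01) _.
apply: le_measure; rewrite ?inE.
- apply: mZ; rewrite (_ : [set v | _] = [set v | enorm (1 *: v - y) < N * dl / 2]).
    by apply: borel_open; exact: open_enorm.
  by apply/seteqP; split => v /=; rewrite scale1r.
- exact: mZ.
move=> w' /= hv; rewrite /B1 scale_set_eball//=.
move: Aw; rewrite /A /B2 /= scale_set_eball// => hy.
exact: close_in hy hv.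
Qed.

End Markov.

Lemma green_lb {R : realType} {d : nat} {dO : measure_display} {Omega : measurableType dO}
  (P : 'rV[R]_d -> probability Omega R) (Z : R -> Omega -> 'rV[R]_d)
  (z : 'rV[R]_d) (t0 c : R) (B : set 'rV[R]_d) :
  0 <= t0 -> 0 <= c ->
  (forall s, 0 <= s <= 1 -> (c%:E <= P z (Z (t0 + s)%R @^-1` B))%E) ->
  (c%:E <= Green P Z z B)%E.
Proof.
move=> t00 c0 hc; rewrite /Green.
have := @integral_lb_cst _ _ _ lebesgue_measure `[0, +oo[%classic `[t0, t0 + 1]%classic
  (fun t => P z (Z t @^-1` B)) c (measurable_itv _).
move=> H; apply: le_trans (H _ c0 _ _); last first.
- move=> t /=; rewrite in_itv /= => /andP[h1 h2].
  have := hc (t - t0); rewrite [t0 + _]addrC subrK; apply.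
  by rewrite subr_ge0 h1 /= lerBlDl.
- by move=> t _.
- move=> t /=; rewrite !in_itv /= => /andP[h _]; rewrite andbT.
  exact: le_trans h.
rewrite [X in (_ * X)%E](_ : _ = 1%E) ?mule1//.
have := @lebesgue_measure_itv R `[t0, t0 + 1].
rewrite /= lte_fin ltrDl ltr01 -EFinB addrAC subrr add0r; apply.
Qed.


Lemma liminf_le {R : realType} (u v : (\bar R)^nat) :
  (forall e : R, 0 < e -> exists N, forall n, (N <= n)%N -> (u n - e%:E <= v n)%E) ->
  (limn_einf u <= limn_einf v)%E.
Proof.
move=> h; apply/lee_subgt0Pr => e e0.
have [N hN] := h e e0.
rewrite addeC -limn_einf_shift// !limn_einf_lim.
apply: lee_lim; [exact: is_cvg_einfs|exact: is_cvg_einfs|].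
near=> n; apply: le_ereal_inf_tmp => _ [k /= nk <-].
apply: ereal_inf_le; exists (- e%:E + u k)%E; first by exists k.
rewrite addeC; apply: hN; apply: leq_trans nk.
by near: n; exists N.
Unshelve. all: by end_near. Qed.

Theorem mainTheorem8 (R : realType) (d : nat) (dO : measure_display)
  (Omega : measurableType dO) (E : set 'rV[R]_d)
  (P : 'rV[R]_d -> probability Omega R) (Z : R -> Omega -> 'rV[R]_d) :
  unbounded E -> strong_markov_cadlag E P Z -> H2 E P Z ->
  forall (q q' : 'rV[R]_d) (delta delta' T : R),
    0 < delta -> 0 < delta' -> 0 < T ->
  (limn_einf (fun n : nat =>
     ereal_inf [set ((n%:R)^-1)%R%:E * lne (P z (Z (T * n%:R)%R @^-1`
                    scale_set n%:R (eball q' (delta' / 2)%R))) | z in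
                [set z | E z /\ (enorm (z - n%:R *: q) < delta * n%:R)%R]])
   <=
   limn_einf (fun n : nat =>
     ereal_inf [set ((n%:R)^-1)%R%:E * lne (Green P Z z (scale_set n%:R (eball q' delta'))) | z in
                [set z | E z /\ (enorm (z - n%:R *: q) < delta * n%:R)%R]]))%E.
Proof.
move=> _ hSM hH2 q q' dl dl' T dl0 dl'0 T0.
have mZ : forall t B, borel_rV B -> measurable (Z t @^-1` B) by case: hSM.
have [K [K0 tl]] := tail _ _ _ mZ hH2.
apply: liminf_le => e e0.
have ln20 : 0 < ln (2 : R) by rewrite ln_gt0// ltr1n.
pose x0 : R := 2 * K / dl' + ln 2 / e.
have x00 : 0 <= x0 by rewrite /x0 addr_ge0// ?divr_ge0// ?mulr_ge0// ltW.
exists (Num.Def.archi_bound x0) => n hn.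
have hx : x0 < n%:R.
  apply: lt_le_trans (Num.Theory.archi_boundP x00) _.
  by rewrite ler_nat.
set N : R := n%:R.
have N0 : 0 < N by apply: le_lt_trans hx.
have hK : K <= N * dl' / 2.
  have : 2 * K / dl' < N.
    by apply: le_lt_trans hx; rewrite /x0 lerDl divr_ge0 // ltW.
  move=> h; have e1 : 2 * K / dl' * dl' = 2 * K by rewrite -mulrA mulVf ?mulr1 ?gt_eqF.
  have h2 : 2 * K / dl' * dl' < N * dl' by rewrite ltr_pM2r.
  lra.
have hl : ln 2 / N <= e.
  have : ln 2 / e < N.
    by apply: le_lt_trans hx; rewrite /x0 lerDr divr_ge0 // ?mulr_ge0 // ltW.
  move=> h; have e1 : ln 2 / e * e = ln 2 by rewrite -mulrA mulVf ?mulr1 ?gt_eqF.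
  have e2 : ln 2 / N * N = ln 2 by rewrite -mulrA mulVf ?mulr1 ?gt_eqF.
  have h2 : ln 2 / e * e < N * e by rewrite ltr_pM2r.
  have h3 : ln 2 / N * N <= e * N by nra.
  by rewrite -(ler_pM2r N0).
apply: le_ereal_inf_tmp => _ [z [Ez hz] <-].
pose p := P z (Z (T * N) @^-1` scale_set N (eball q' (dl' / 2))).
apply: (@le_trans _ _ ((N^-1)%:E * lne p - e%:E)%E).
  by apply: leeB => //; apply: ereal_inf_lbound; exists z.
have pm : measurable (Z (T * N) @^-1` scale_set N (eball q' (dl' / 2))).
  by apply: mZ; apply: borel_ball.
have [fp [pE fp0]] : exists fp, p = fp%:E /\ 0 <= fp.
  have p0 : (0 <= p)%E by apply: measure_ge0.
  move: p0 (probability_le1 (P z) pm).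
  rewrite -/p; case: p => [r| |]//=; rewrite lee_fin => r0 _.
  by exists r.
have hG : ((1/2 * fp)%:E <= Green P Z z (scale_set N (eball q' dl')))%E.
  apply: (@green_lb _ _ _ _ P Z z (T * N)).
  - by rewrite mulr_ge0// ltW.
  - by rewrite mulr_ge0.
  move=> s s01; rewrite EFinM -pE.
  apply: (markov_step _ _ _ hSM _ _ _ (T * N) _ q' z tl hK N0 dl'0 _ s01 Ez).
  by rewrite mulr_ge0 // ltW.
have [fpz|fpp] := lerP fp 0.
  rewrite pE le0_lneNy ?lee_fin// gt0_muleNy ?lte_fin ?invr_gt0//.
  by rewrite addeC addeNy leNye.
rewrite pE lne_EFin//.
have hG2 : ((ln (1/2 * fp))%:E <= lne (Green P Z z (scale_set N (eball q' dl'))))%E.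
  rewrite -lne_EFin ?mulr_gt0//.
  rewrite lee_lne// !in_itv /= ?leey ?andbT ?lee_fin ?mulr_ge0// ?ltW//.
  by apply: lt_le_trans hG; rewrite lte_fin mulr_gt0.
have h0 : (0 <= (N^-1)%:E)%E by rewrite lee_fin invr_ge0 ltW.
apply: le_trans (lee_wpmul2l h0 hG2).
rewrite -EFinM -EFinB lee_fin.
rewrite mulrC lnM ?posrE ?mulr_gt0// ln_div ?posrE// ln1 sub0r.
move: hl; rewrite mulrDr; nra.
Qed.
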